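(* Let $G$ be an abelian group, regarded as a discrete group, and let $V\to BG$ be the $\mathrm{PGL}_n(\mathbb{C})$-bundle associated to a homomorphism $\rho:G\to\mathrm{PU}(n)$. Then there is a subgroup $M\subset G$ of finite index such that the restriction $V|_{BM}$ comes from a complex vector bundle of rank $n$ (equivalently, $\rho|_M$ lifts to a linear representation $M\to\mathrm{GL}_n(\mathbb C)$, and the obstruction class of $V|_{BM}$ vanishes).
   Context: $BG$ is the classifying space of the discrete group $G$ (a $K(G,1)$). For a homomorphism $\rho:G\to L$ into a Lie group $L$, the associated flat principal $L$-bundle on $BG$ is $(EG\times L)/G$ with $G$ acting diagonally. A $\mathrm{PGL}_n$-bundle comes from a vector bundle of rank $n$ if it is the projectivization of one, i.e. lifts along $\mathrm{GL}_n\to\mathrm{PGL}_n$. *)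

(* Defs.v *)
From HB Require Import structures.
From mathcomp Require Import all_boot all_order all_algebra.
Set Implicit Arguments. Unset Strict Implicit. Unset Printing Implicit Defensive.
Import Order.TTheory GRing.Theory Num.Theory.
Local Open Scope ring_scope.

Definition unitary_mx (C : numClosedFieldType) (n : nat) (A : 'M[C]_n) : Prop :=
  A *m (map_mx Num.conj A)^T = 1%:M.

(* Equality in PGL_n(C): A and B differ by a nonzero scalar. *)
Definition proj_eq (C : numClosedFieldType) (n : nat) (A B : 'M[C]_n) : Prop :=
  exists c : C, c != 0 /\ A = c *: B.

(* A homomorphism rho : G -> PU(n), described through (arbitrary) unitary
   representatives of its values: rho g is unitary, and
   [rho (g + h)] = [rho g][rho h] in PU(n) = U(n)/U(1). *)
Definition PU_hom (G : zmodType) (C : numClosedFieldType) (n : nat)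
    (rho : G -> 'M[C]_n) : Prop :=
  (forall g, unitary_mx (rho g)) /\
  (forall g h, proj_eq (rho (g + h)) (rho g *m rho h)).

Definition is_subgroup (G : zmodType) (M : G -> Prop) : Prop :=
  M 0 /\ (forall x y, M x -> M y -> M (x - y)).

Definition finite_index (G : zmodType) (M : G -> Prop) : Prop :=
  exists s : seq G, forall g, exists2 r, r \in s & M (g - r).

(* rho restricted to M lifts along GL_n(C) -> PGL_n(C) to a linear
   representation M -> GL_n(C). *)
Definition lifts_on (G : zmodType) (C : numClosedFieldType) (n : nat)
    (M : G -> Prop) (rho : G -> 'M[C]_n) : Prop :=
  exists sigma : G -> 'M[C]_n,
    (forall m, M m -> sigma m \in unitmx /\ proj_eq (sigma m) (rho m)) /\
    (forall m1 m2, M m1 -> M m2 -> sigma (m1 + m2) = sigma m1 *m sigma m2).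

(* Main.v *)
Require Import Defs.
From HB Require Import structures.
From mathcomp Require Import all_boot all_order all_algebra.
From mathcomp Require Import spectral.
From mathcomp Require Import ring.
From Stdlib Require Import Classical ClassicalEpsilon.
Set Implicit Arguments. Unset Strict Implicit. Unset Printing Implicit Defensive.
Import Order.TTheory GRing.Theory Num.Theory.
Local Open Scope ring_scope.

Lemma maxlist (T : Type) (ok : seq T -> Prop) (B : nat) :
  ok [::] -> (forall s, ok s -> (size s <= B)%N) ->
  exists s, ok s /\ forall x, ~ ok (x :: s).
Proof.
move=> ok0 okB; apply: NNPP => Hn.
have ext : forall s, ok s -> exists x, ok (x :: s).
  move=> s oks; apply: NNPP => Hx; apply: Hn; exists s; split => // x Hox.
  by apply: Hx; exists x.
have : forall k, exists s, ok s /\ size s = k.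
  elim=> [|k [s [oks <-]]]; first by exists [::].
  by have [x Hx] := ext s oks; exists (x :: s).
move=> /(_ B.+1) [s [oks Hs]]; have := okB s oks; by rewrite Hs ltnn.
Qed.

Fixpoint pw (G : eqType) (P : G -> G -> Prop) (s : seq G) : Prop :=
  match s with
  | [::] => True
  | x :: t => (forall y, y \in t -> ~ P x y) /\ pw P t
  end.

Lemma scal_unit_eq1 (C : fieldType) n (c : C) (A : 'M[C]_n.+1) :
  A \in unitmx -> c *: A = A -> c = 1.
Proof.
move=> uA /(congr1 (mulmx^~ (invmx A))); rewrite -scalemxAl mulmxV // scalemx1.
by move/matrixP/(_ ord0 ord0); rewrite !mxE eqxx !mulr1n.
Qed.

Lemma unit_neq0 (C : fieldType) n (A : 'M[C]_n.+1) : A \in unitmx -> A != 0.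
Proof.
move=> uA; apply/negP => /eqP A0.
have := scal_unit_eq1 (c := 0) uA; rewrite A0 scaler0 => /(_ erefl) /eqP.
by rewrite eq_sym oner_eq0.
Qed.

Theorem proposition4p6 (G : zmodType) (C : numClosedFieldType) (n : nat)
    (rho : G -> 'M[C]_n) :
  PU_hom rho ->
  exists M : G -> Prop,
    is_subgroup M /\ finite_index M /\ lifts_on M rho.
Proof.
case: n rho => [|n] rho [Hu Hp].
  exists (fun _ => True); split; first by [].
  split; first by exists [:: 0] => g; exists 0; rewrite ?mem_head.
  exists (fun _ => 1%:M); split => [m _|m1 m2 _ _]; last by rewrite mul1mx.
  split; first exact: unitmx1.
  by exists 1; rewrite oner_eq0; split => //; apply/matrixP => -[].
have Hunit g : rho g \in unitmx by have [] := mulmx1_unit (Hu g).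
have Hc g h : exists c : C, rho h *m rho g = c *: (rho g *m rho h).
  have [a [a0 Ha]] := Hp g h; have [b [b0 Hb]] := Hp h g.
  exists (b^-1 * a); rewrite -scalerA -Ha -addrC Hb scalerA mulVf //.
  by rewrite scale1r.
pose cc g h := proj1_sig (constructive_indefinite_description _ (Hc g h)).
have Hcc g h : rho h *m rho g = cc g h *: (rho g *m rho h).
  exact: (proj2_sig (constructive_indefinite_description _ (Hc g h))).
clearbody cc; clear Hc.
pose M g := forall h, rho g *m rho h = rho h *m rho g.
have Hsub x y : exists a : C, rho (x - y) = a *: (rho x *m invmx (rho y)).
  have [a [a0 Ha]] := Hp (x - y) y; rewrite subrK in Ha.
  by exists a^-1; rewrite Ha -scalemxAl mulmxK // scalerA mulVf // scale1r.
have K3 x y : (forall h, cc x h = cc y h) -> M (x - y).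
  move=> Hxy h; have [a ->] := Hsub x y.
  have Hinv : invmx (rho y) *m rho h = cc y h *: (rho h *m invmx (rho y)).
    have := congr1 (fun X => invmx (rho y) *m X *m invmx (rho y)) (Hcc y h).
    by move=> /=; rewrite mulmxA mulmxK // -scalemxAr mulKmx // -scalemxAl => ->.
  rewrite -scalemxAl -scalemxAr -mulmxA Hinv -scalemxAr mulmxA.
  by rewrite mulmxA (Hcc x h) Hxy -scalemxAl.
have K4 x h : M x -> cc x h = 1.
  move=> Mx; apply: (@scal_unit_eq1 _ _ _ (rho x *m rho h)).
    by rewrite unitmx_mul !Hunit.
  by rewrite -Hcc Mx.
have M0 : M 0 by have := K3 0 0 (fun h => erefl); rewrite subrr.
have Msub x y : M x -> M y -> M (x - y).
  by move=> Mx My; apply: K3 => h; rewrite !K4.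
have dimB (s : seq 'M[C]_n.+1) : free s -> (size s <= n.+1 * n.+1)%N.
  move=> /eqP <-; have := dimvS (subvf <<s>>%VS).
  by rewrite dimvf (dim_matrix C).
have Hfree (s : seq G) : pw (fun x y => M (x - y)) s -> free (map rho s).
  elim: s => [_|x t IH [Hx /IH Ht]]; first by rewrite /free span_nil dimv0.
  rewrite /= free_cons Ht andbT; apply/negP => Hin.
  pose X := in_tuple (map rho t).
  have [k Hrx] : exists k : 'I_(size (map rho t)) -> C,
      rho x = \sum_i k i *: X`_i.
    by exists (fun i => coord X i (rho x)); exact: coord_span.
  have Hti (i : 'I_(size (map rho t))) : X`_i = rho (t`_i).
    by rewrite (nth_map 0) // -(size_map rho).
  have Hk i : k i = 0.
    have [h Hh] : exists h, cc x h != cc (t`_i) h.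
      apply: NNPP => Hne; apply: (Hx (t`_i)).
        by apply: mem_nth; rewrite -(size_map rho).
      apply: K3 => h; apply: NNPP => Hneq; apply: Hne; exists h; exact/eqP.
    have Hsum : \sum_i (k i * (cc (t`_i) h - cc x h)) *: X`_i = 0.
      set F := \sum_i _.
      have : F *m rho h = 0.
        rewrite mulmx_suml.
        transitivity (rho h *m rho x - cc x h *: (rho x *m rho h));
          last by rewrite Hcc subrr.
        rewrite Hrx mulmx_sumr mulmx_suml scaler_sumr -sumrB; apply: eq_bigr => j _.
        rewrite Hti -!scalemxAl -scalemxAr (Hcc (t`_j) h) !scalerA -scalerBl.
        by congr (_ *: _); ring.
      by move=> /(congr1 (mulmx^~ (invmx (rho h)))); rewrite mulmxK // mul0mx.
    move: Ht => /(@vector.freeP _ _ _ X) => /(_ _ Hsum i) /eqP; rewrite mulf_eq0 subr_eq0.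
    by case/orP => [/eqP //| /eqP E]; rewrite E eqxx in Hh.
  move: Hrx; rewrite (eq_bigr (fun _ => 0)) => [|i _]; last by rewrite Hk scale0r.
  by rewrite big1 // => /eqP; rewrite (negbTE (unit_neq0 (Hunit x))).
exists M; split; first by split.
split.
  have [s [Hs Hmax]] := @maxlist _ (pw (fun x y => M (x - y))) (n.+1 * n.+1) I
    (fun s Hs => ltac:(rewrite -(size_map rho); exact: dimB _ (Hfree s Hs))).
  exists s => g; apply: NNPP => Hn; apply: (Hmax g); split => // y Hy HM.
  by apply: Hn; exists y.
have [||s [[Ms Fs] Hmax]] := @maxlist _
   (fun s => (forall y, y \in s -> M y) /\ free (map rho s)) (n.+1 * n.+1).
- by split => //; rewrite /free span_nil dimv0.
- by move=> s [_ F]; rewrite -(size_map rho); exact: dimB.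
have Hspan m : M m -> rho m \in <<map rho s>>%VS.
  move=> Mm; apply: NNPP => Hn; apply: (Hmax m); split.
    by move=> y; rewrite inE => /orP[/eqP -> //|]; exact: Ms.
  by rewrite /= free_cons Fs andbT; apply/negP.
have [|v v0 /allP Hv] := @common_eigenvector C n.+1 (map rho s) (ltn0Sn n).
  by move=> A B /mapP[y Hy ->] /mapP[z Hz ->]; rewrite /comm_mx; exact: Ms y Hy z.
have Heig m : M m -> exists a, v *m rho m = a *: v.
  move=> Mm; apply/sub_rVP.
  rewrite (coord_span (X := in_tuple (map rho s)) (Hspan m Mm)) mulmx_sumr.
  apply: summx_sub => i _; rewrite -scalemxAr; apply: scalemx_sub.
  by apply: Hv; exact: mem_nth.
have [mu Hmu] : exists mu : G -> C, forall m, M m -> v *m rho m = mu m *: v.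
  exists (fun m => match excluded_middle_informative (M m) with
    | left Mm => proj1_sig (constructive_indefinite_description _ (Heig m Mm))
    | right _ => 0 end).
  move=> m Mm; case: excluded_middle_informative => // Mm'.
  exact: (proj2_sig (constructive_indefinite_description _ (Heig m Mm'))).
have Hmu0 m : M m -> mu m != 0.
  move=> Mm; apply/negP => /eqP H0; move: (Hmu m Mm); rewrite H0 scale0r.
  move=> /(congr1 (mulmx^~ (invmx (rho m)))); rewrite mulmxK // mul0mx => /eqP.
  by rewrite (negbTE v0).
exists (fun m => (mu m)^-1 *: rho m); split.
  move=> m Mm; split; first by rewrite unitmxZ ?unitfE ?invr_eq0 ?Hmu0.
  by exists (mu m)^-1; rewrite invr_eq0 Hmu0.
move=> m1 m2 M1 M2.
have M12 : M (m1 + m2) by have := Msub _ _ M1 (Msub _ _ M0 M2); rewrite sub0r opprK.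
have [a [a0 Ha]] := Hp m1 m2.
have Hmu12 : mu (m1 + m2) = a * (mu m1 * mu m2).
  apply/eqP; rewrite -subr_eq0; apply/eqP.
  have : (mu (m1 + m2) - a * (mu m1 * mu m2)) *: v = 0.
    rewrite scalerBl -Hmu // Ha -scalemxAr mulmxA Hmu // -scalemxAl Hmu //.
    by rewrite !scalerA mulrA subrr.
  by move/eqP; rewrite scaler_eq0 (negbTE v0) orbF => /eqP.
have H1 := Hmu0 _ M1; have H2 := Hmu0 _ M2.
rewrite Ha Hmu12 -scalemxAl -scalemxAr !scalerA; congr (_ *: _).
by field; rewrite a0 H1 H2.
Qed.
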